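(* Suppose $c, \Delta, t\in\mathbb{N}^+$ and $\Delta< t$. Let $V\subseteq [t]^c$. If there exists a function $\theta: V\to [c]$ such that for all $i\in [c]$ we have \[ \Big|\big\{\mathbf{v}(i)\mid \text{$\mathbf{v}\in V$ and $\theta(\mathbf{v})= i$}\big\}\Big| \le t- \Delta, \] then $|V|\le t^c- \Delta^c$.
   Context: For $n\in\mathbb N$, $[n]:=\{1,\ldots,n\}$, and $\mathbb N^+$ denotes the positive integers. For a tuple $\mathbf{v}\in[t]^c$ and $i\in[c]$, $\mathbf{v}(i)$ denotes the $i$-th coordinate of $\mathbf{v}$. *)

(* Defs.v *)
From mathcomp Require Import all_boot.
(* [t] is represented by 'I_t = {0,...,t-1} (a relabeling by i |-> i+1),
   [c] by 'I_c, and [t]^c by {ffun 'I_c -> 'I_t}. *)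

(* Main.v *)
Require Import Defs.
From mathcomp Require Import all_boot zify.

Theorem lemma4p5 (c Delta t : nat) (hc : 0 < c) (hD : 0 < Delta) (ht : 0 < t)
  (hDt : Delta < t) (V : {set {ffun 'I_c -> 'I_t}})
  (theta : {ffun 'I_c -> 'I_t} -> 'I_c) :
  (forall i : 'I_c, #|[set (v : {ffun 'I_c -> 'I_t}) i | v in V & theta v == i]| <= t - Delta) ->
  #|V| <= t ^ c - Delta ^ c.
Proof.
move=> H.
pose S i := [set (v : {ffun 'I_c -> 'I_t}) i | v in V & theta v == i].
pose F i := ~: S i.
pose W := [set v in family F].
have hsub : V \subset ~: W.
  apply/subsetP => v vV; rewrite !inE; apply/familyP => /(_ (theta v)).
  rewrite !inE => /negP; apply; apply/imsetP; exists v => //; by rewrite inE vV eqxx.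
have cW : #|W| = \prod_(i : 'I_c) #|F i|.
  rewrite cardsE card_family.
  have fm : forall (s : seq 'I_c), foldr muln 1 [seq #|F x| | x <- s] = \prod_(x <- s) #|F x|.
    by elim=> [|a s IH]; rewrite ?big_nil ?big_cons //= IH.
  by rewrite fm enumT.
have lb : Delta ^ c <= #|W|.
  rewrite cW -{1}(card_ord c) -prod_nat_const; apply: leq_prod => i _.
  rewrite /F cardsCs setCK card_ord.
  by have := H i; rewrite -/(S i); lia.
apply: leq_trans (subset_leq_card hsub) _.
rewrite cardsCs setCK card_ffun !card_ord.
by rewrite leq_sub2l.
Qed.
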